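(* Let $m$ be an odd positive integer and $q\geq 1$. Then $m*Q_q$ divides $Q_{mq}$.
   Context: $Q_q$ denotes the $q$-dimensional hypercube graph (vertices are $q$-tuples of $0$'s and $1$'s, adjacent iff they differ in exactly one coordinate). For a graph $G$ and positive integer $m$, the $m$-stretch $m*G$ is the graph obtained from $G$ by replacing each edge by a path with $m$ edges, these paths being internally vertex-disjoint. For graphs $H$ and $G$, ''$H$ divides $G$'' means there is a collection of subgraphs $H_i$ of $G$, each isomorphic to $H$, such that $E(G)$ is the disjoint union of the edge sets $E(H_i)$. *)

(* Defs.v *)
(* finite simple graphs as symmetric irreflexive boolean relations on finTypes. *)
From mathcomp Require Import all_boot.
Set Implicit Arguments. Unset Strict Implicit. Unset Printing Implicit Defensive.

Definition edges (V : finType) (e : rel V) : {set {set V}} :=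
  [set [set p.1; p.2] | p : V * V & e p.1 p.2].

(* A subgraph of (V,g) isomorphic to (W,h) is given by an injective map f : W -> V
   sending edges to edges; the subgraph is f(W) with edge set f(E(H)). *)
Definition is_copy (W V : finType) (h : rel W) (g : rel V) (f : W -> V) : Prop :=
  injective f /\ (forall x y, h x y -> g (f x) (f y)).

Definition copy_edges (W V : finType) (h : rel W) (f : W -> V) : {set {set V}} :=
  [set [set f p.1; f p.2] | p : W * W & h p.1 p.2].

Definition divides (W V : finType) (h : rel W) (g : rel V) : Prop :=
  exists (k : nat) (F : 'I_k -> W -> V),
    (forall i, is_copy h g (F i)) /\
    (forall i j : 'I_k, i != j -> [disjoint copy_edges h (F i) & copy_edges h (F j)]) /\
    \bigcup_(i < k) copy_edges h (F i) = edges g.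

Definition cube_adj (q : nat) : rel {ffun 'I_q -> bool} :=
  fun x y => #|[set i | x i != y i]| == 1.

(* Each edge {x,y} of G is represented once, as the pair (x,y)
   with enum_rank x < enum_rank y; it is replaced by the path
   x = p_0, p_1, ..., p_{m-1}, p_m = y whose interior vertices p_j (1 <= j <= m-1)
   are the new vertices inr (edge, j-1). *)
Section Stretch.
Variables (V : finType) (m : nat) (e : rel V).

Definition sedge := {p : V * V | e p.1 p.2 && (enum_rank p.1 < enum_rank p.2)}.

Definition svert := (V + (sedge * 'I_m.-1))%type.

Definition pathv (a : sedge) (j : nat) : svert :=
  if j == 0 then inl (val a).1
  else match insub j.-1 with
       | Some k => inr (a, k)
       | None => inl (val a).2
       end.

Definition stretch_adj : rel svert :=
  fun u v => [exists a : sedge, exists j : 'I_m,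
    ((u == pathv a j) && (v == pathv a j.+1)) ||
    ((v == pathv a j) && (u == pathv a j.+1))].
End Stretch.

(* Main.v *)
Require Import Defs.
From mathcomp Require Import all_boot.
From mathcomp Require Import zify.
Set Implicit Arguments. Unset Strict Implicit. Unset Printing Implicit Defensive.

Section QmS.
Variable h : nat.
Local Notation m := h.*2.+1.

Lemma ltn_cen : h < m. Proof. lia. Qed.
Definition cen : 'I_m := Ordinal ltn_cen.
Definition rv (b : 'I_m) : 'I_m := rev_ord b.
Definition tau (c : {ffun 'I_m -> bool}) (b : 'I_m) : 'I_m :=
  if c b == c (rv b) then rv b else b.
Definition walk (c : {ffun 'I_m -> bool}) (t : nat) : {ffun 'I_m -> bool} :=
  [ffun b => c b (+) (tau c b < t)].
Definition flipat (w : {ffun 'I_m -> bool}) (p : 'I_m) : {ffun 'I_m -> bool} :=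
  [ffun b => w b (+) (b == p)].
Definition Rr (w : {ffun 'I_m -> bool}) (p : 'I_m) : bool :=
  if p == cen then ~~ w cen else (w p == w (rv p)) == (cen < p).
Definition Tf (w : {ffun 'I_m -> bool}) (p : 'I_m) : nat :=
  if p == cen then h else if w cen then maxn p (rv p) else minn p (rv p).
Definition fb (w : {ffun 'I_m -> bool}) (t : nat) (b : 'I_m) : bool :=
  if (t <= b) && (t <= rv b) then false
  else if (b < t) && (rv b < t) then true
  else (b <= rv b) == (w b == w (rv b)).
Definition Psi (w : {ffun 'I_m -> bool}) (t : nat) : {ffun 'I_m -> bool} :=
  [ffun b => w b (+) fb w t b].

Lemma rv_val (b : 'I_m) : val (rv b) = h.*2 - b.
Proof. rewrite /rv /=; lia. Qed.
Lemma rvK (b : 'I_m) : rv (rv b) = b.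
Proof. exact: rev_ordK. Qed.
Lemma ord_eqE (a b : 'I_m) : (a == b) = (val a == val b).
Proof. by []. Qed.

Ltac ordl := repeat match goal with
  | b : 'I_m |- _ => move: (ltn_ord b) (rv_val b); move: b => [? ?] /=
  end; rewrite /= ?ord_eqE /=; lia.

Lemma rv_cen : rv cen = cen.
Proof. apply: val_inj; rewrite rv_val /=; lia. Qed.

Lemma tau_cases c b : (tau c b = rv b /\ c b = c (rv b)) \/ (tau c b = b /\ c b != c (rv b)).
Proof. rewrite /tau; case: eqP => H; [by left | by right; split => //; apply/eqP]. Qed.

Lemma tau_rv c b : tau c (rv b) = rv (tau c b).
Proof. rewrite /tau rvK eq_sym; by case: eqP; rewrite ?rvK. Qed.

Lemma tauK c b : tau c (tau c b) = b.
Proof.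
case: (tau_cases c b) => [[E _]|[E _]]; rewrite E //.
by rewrite tau_rv E rvK.
Qed.

Lemma tau_cen c : tau c cen = cen.
Proof. by rewrite /tau rv_cen; case: eqP. Qed.

Lemma walkE c t b : walk c t b = c b (+) (tau c b < t).
Proof. by rewrite ffunE. Qed.

Lemma walkS c (t : 'I_m) : walk c t.+1 = flipat (walk c t) (tau c t).
Proof.
apply/ffunP => b; rewrite !ffunE -addbA; congr (_ (+) _).
have -> : (b == tau c t) = (tau c b == t).
  by apply/eqP/eqP => [->|<-]; rewrite tauK.
rewrite ltnS leq_eqVlt ord_eqE; case: ltngtP => //=.
Qed.

Lemma PsiK c t : Psi (walk c t) t = c.
Proof.
apply/ffunP => b; rewrite !ffunE -addbA.
suff -> : fb (walk c t) t b = (tau c b < t) by rewrite addbb addbF.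
rewrite /fb !walkE tau_rv.
have Hb := ltn_ord b.
case: (tau_cases c b) => [[E Ec]|[E Ec]]; rewrite E ?rvK !rv_val.
- rewrite -Ec. move: (c b) => cb.
  repeat case: ifP; case: cb; lia.
- move: Ec; case: (c b); case: (c (rv b)) => //= _;
  repeat case: ifP; lia.
Qed.

Lemma Tf_walk (c : {ffun 'I_m -> bool}) (t : 'I_m) : c cen = false -> Tf (walk c t) (tau c t) = t.
Proof.
move=> Hc; rewrite /Tf walkE tau_cen Hc /= ord_eqE.
have Ht := ltn_ord t.
case: (tau_cases c t) => [[E _]|[E _]]; rewrite E ?rv_val ?rvK /=;
repeat case: ifP; lia.
Qed.

Lemma R_walk (c : {ffun 'I_m -> bool}) (t : 'I_m) : c cen = false -> Rr (walk c t) (tau c t).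
Proof.
move=> Hc; rewrite /Rr !walkE tau_cen Hc tauK tau_rv tauK ord_eqE.
have Ht := ltn_ord t.
case: (tau_cases c t) => [[E Ec]|[E Ec]]; rewrite E ?rvK ?rv_val /=.
- rewrite -Ec; case: (c t); repeat case: ifP; lia.
- move: Ec; case: (c t); case: (c (rv t)) => //= _; repeat case: ifP; lia.
Qed.

Lemma R_flip (w : {ffun 'I_m -> bool}) p : Rr (flipat w p) p = ~~ Rr w p.
Proof.
rewrite /Rr !ffunE eqxx.
case: eqP => [->|Hp]; first by rewrite eqxx; case: (w cen).
have -> : (rv p == p) = false.
  apply/negP => /eqP E; apply: Hp; apply: val_inj; move: (f_equal val E).
  rewrite rv_val /=; have := ltn_ord p; lia.
by case: (w p); case: (w (rv p)); case: (cen < p).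
Qed.

Lemma Psi_inj (w w' : {ffun 'I_m -> bool}) t : Psi w t = Psi w' t -> w = w'.
Proof.
move=> E; apply/ffunP => b.
have := congr1 (fun f : {ffun 'I_m -> bool} => f b) E; have := congr1 (fun f : {ffun 'I_m -> bool} => f (rv b)) E.
rewrite !ffunE /fb !rvK !rv_val.
have Hb := ltn_ord b.
case: (w b); case: (w (rv b)); case: (w' b); case: (w' (rv b));
repeat case: ifP; lia.
Qed.

Lemma Tf_lt (w : {ffun 'I_m -> bool}) p : Tf w p < m.
Proof. rewrite /Tf; have := ltn_ord p; rewrite rv_val; repeat case: ifP; lia. Qed.

Lemma Psi_walk (w : {ffun 'I_m -> bool}) p : Rr w p ->
  let t := Ordinal (Tf_lt w p) in
  [/\ Psi w t cen = false, walk (Psi w t) t = w & tau (Psi w t) t = p].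
Proof.
move=> HR t.
have Hp := ltn_ord p.
split.
- rewrite ffunE /fb rv_cen /t /=.
  move: HR; rewrite /Rr /Tf ord_eqE /=; rewrite ?rv_val.
  case: (w cen); case: (w p); case: (w (rv p)); repeat case: ifP; lia.
- apply: (@Psi_inj _ _ t); by rewrite PsiK.
- have ET : val t = Tf w p by [].
  have [Et|Et] : t = p \/ t = rv p.
    have : val t = p \/ val t = rv p.
      rewrite ET /Tf ?rv_val; case: ifP => [/eqP->|_]; first by left.
      case: ifP; lia.
    by case=> E; [left|right]; apply: val_inj.
  all: move: ET; rewrite Et => ET.
  all: rewrite /tau; case: ifP => Hc; apply: val_inj; rewrite /= ?rv_val ?rvK;
  move: Hc HR ET; rewrite /Rr /Tf !ffunE /fb !rvK ?rv_val /= ord_eqE /=;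
  case: (w cen); case: (w p); case: (w (rv p)); repeat case: ifP; lia.
Qed.

Lemma flipK (w : {ffun 'I_m -> bool}) p : flipat (flipat w p) p = w.
Proof. by apply/ffunP => b; rewrite !ffunE -addbA addbb addbF. Qed.

Lemma flip_flip_eq (w : {ffun 'I_m -> bool}) a b : flipat (flipat w a) b = w -> a = b.
Proof.
move=> E; have := congr1 (fun f : {ffun 'I_m -> bool} => f a) E.
rewrite !ffunE eqxx; case: (w a); case: eqP => //.
Qed.

Lemma set2_eq (T : finType) (A B A' B' : T) :
  [set A; B] = [set A'; B'] -> (A = A' /\ B = B') \/ (A = B' /\ B = A').
Proof.
move=> E.
have HA : A \in [set A'; B'] by rewrite -E !inE eqxx.
have HB : B \in [set A'; B'] by rewrite -E !inE eqxx orbT.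
have HA' : A' \in [set A; B] by rewrite E !inE eqxx.
have HB' : B' \in [set A; B] by rewrite E !inE eqxx orbT.
move: HA HB HA' HB'; rewrite !inE.
do 4 (case/orP=> /eqP ?); subst; auto.
Qed.

Lemma QD (c c' : {ffun 'I_m -> bool}) (t t' : 'I_m) :
  c cen = false -> c' cen = false ->
  [set walk c t; walk c t.+1] = [set walk c' t'; walk c' t'.+1] -> c = c'.
Proof.
move=> Hc Hc'; rewrite !walkS.
have R1 := R_walk t Hc; have R2 := R_walk t' Hc'.
have E1 : c = Psi (walk c t) (Tf (walk c t) (tau c t)) by rewrite Tf_walk // PsiK.
have E2 : c' = Psi (walk c' t') (Tf (walk c' t') (tau c' t')) by rewrite Tf_walk // PsiK.
move: R1 R2 E1 E2.
move: (walk c t) (tau c t) (walk c' t') (tau c' t') => w p w' p' R1 R2 E1 E2.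
case/set2_eq => [[Ew Ef]|[Ew Ef]].
- subst w'. have Ep : p = p'.
    by apply: (@flip_flip_eq (flipat w p)); rewrite flipK; apply/esym.
  by subst p'; rewrite E1 E2.
- have Ep : p = p'.
    apply/esym; apply: (@flip_flip_eq w'); by rewrite -Ew Ef.
  subst p' w; by move: R1; rewrite R_flip R2.
Qed.

Lemma QC (v : {ffun 'I_m -> bool}) p : exists (c : {ffun 'I_m -> bool}) (t : 'I_m),
  c cen = false /\ [set v; flipat v p] = [set walk c t; walk c t.+1].
Proof.
pose w := if Rr v p then v else flipat v p.
have Hw : Rr w p by rewrite /w; case: ifP => // H; rewrite R_flip H.
have [H1 H2 H3] := Psi_walk Hw.
set t := Ordinal (Tf_lt w p) in H1 H2 H3.
exists (Psi w t), t; split => //.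
rewrite walkS H2 H3 /w; case: ifP => _ //.
by rewrite flipK setUC.
Qed.

Lemma walk0 (c : {ffun 'I_m -> bool}) : walk c 0 = c.
Proof. by apply/ffunP => b; rewrite walkE addbF. Qed.

Definition xorv (c : {ffun 'I_m -> bool}) (x : bool) : {ffun 'I_m -> bool} :=
  [ffun b => c b (+) x].

Lemma walkm (c : {ffun 'I_m -> bool}) : walk c m = xorv c true.
Proof. by apply/ffunP => b; rewrite walkE ffunE ltn_ord. Qed.

Lemma xorv0 c : xorv c false = c.
Proof. by apply/ffunP => b; rewrite ffunE addbF. Qed.

Lemma xorvK c x : xorv (xorv c x) x = c.
Proof. by apply/ffunP => b; rewrite !ffunE -addbA addbb addbF. Qed.

Lemma walk_inj (c : {ffun 'I_m -> bool}) s s' : s <= m -> s' <= m -> walk c s = walk c s' -> s = s'.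
Proof.
wlog H : s s' / s < s'.
  move=> W Hs Hs' E; case: (ltngtP s s') => // H.
  - exact: W.
  - by apply/esym/W.
move=> Hs Hs' E; exfalso.
have Hsm : s < m by apply: leq_trans H Hs'.
pose b := tau c (Ordinal Hsm).
have := congr1 (fun f : {ffun 'I_m -> bool} => f b) E.
rewrite !walkE /b tauK /= ltnn H; by case: (c _).
Qed.

Lemma walk_xorv (c : {ffun 'I_m -> bool}) s x : s <= m -> walk c s = xorv c x -> s = 0 \/ s = m.
Proof.
move=> Hs; case: x => E.
- by right; apply: (walk_inj (c:=c) Hs (leqnn _)); rewrite E walkm.
- by left; apply: (walk_inj (c:=c) Hs (leq0n _)); rewrite E xorv0 walk0.
Qed.

Lemma walk_neq (c : {ffun 'I_m -> bool}) (t : 'I_m) : walk c t != walk c t.+1.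
Proof.
apply/eqP => E; have := walk_inj (ltnW (ltn_ord t)) (ltn_ord t) E; lia.
Qed.

End QmS.


Lemma cube_adj_sym n (X Y : {ffun 'I_n -> bool}) : cube_adj X Y = cube_adj Y X.
Proof.
rewrite /cube_adj; suff -> : [set i | X i != Y i] = [set i | Y i != X i] by [].
by apply/setP => i; rewrite !inE eq_sym.
Qed.

Lemma cube_adjP n (X Y : {ffun 'I_n -> bool}) :
  cube_adj X Y -> exists i, forall j, (X j != Y j) = (j == i).
Proof.
move/cards1P => [i Hi]; exists i => j.
by move/setP: Hi => /(_ j); rewrite !inE.
Qed.

Section Big.
Variables h q : nat.
Local Notation m := h.*2.+1.
Local Notation Blk := {ffun 'I_m -> bool}.
Local Notation Vert := {ffun 'I_(m * q) -> bool}.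

Lemma cardMQ : #|{: 'I_m * 'I_q}| = m * q.
Proof. by rewrite card_prod !card_ord. Qed.

Definition idx (pi : 'I_m * 'I_q) : 'I_(m * q) := cast_ord cardMQ (enum_rank pi).
Definition unidx (n : 'I_(m * q)) : 'I_m * 'I_q := enum_val (cast_ord (esym cardMQ) n).

Lemma idxK : cancel idx unidx.
Proof. by move=> pi; rewrite /idx /unidx cast_ordK enum_rankK. Qed.
Lemma unidxK : cancel unidx idx.
Proof. by move=> n; rewrite /idx /unidx enum_valK cast_ordKV. Qed.

Definition mk (Z : 'I_q -> Blk) : Vert := [ffun n => Z (unidx n).2 (unidx n).1].
Definition blk (X : Vert) (j : 'I_q) : Blk := [ffun p => X (idx (p, j))].

Lemma mkK Z j : blk (mk Z) j = Z j.
Proof. by apply/ffunP => p; rewrite !ffunE idxK. Qed.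
Lemma blkK X : mk (blk X) = X.
Proof. by apply/ffunP => n; rewrite !ffunE -surjective_pairing unidxK. Qed.
Lemma mk_ext Z Z' : (forall j, Z j = Z' j) -> mk Z = mk Z'.
Proof. by move=> E; apply/ffunP => n; rewrite !ffunE E. Qed.
Lemma mk_inj Z Z' : mk Z = mk Z' -> forall j, Z j = Z' j.
Proof. by move=> E j; rewrite -mkK E mkK. Qed.

Lemma adj_mk (i : 'I_q) (p0 : 'I_m) (Z Z' : 'I_q -> Blk) :
  (forall j, j != i -> Z j = Z' j) -> Z' i = flipat (Z i) p0 -> cube_adj (mk Z) (mk Z').
Proof.
move=> H1 H2; apply/cards1P; exists (idx (p0, i)); apply/setP => n.
rewrite -(unidxK n) !inE !ffunE idxK (inj_eq (can_inj idxK)).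
case: (unidx n) => p j /=; rewrite xpair_eqE.
case: (eqVneq j i) => [->|Hj]; last by rewrite H1 // eqxx andbF.
by rewrite H2 ffunE andbT; case: (Z i p); case: (p == p0).
Qed.

Lemma adj_blk (X Y : Vert) : cube_adj X Y -> exists (i : 'I_q) (p0 : 'I_m),
  (forall j, j != i -> blk Y j = blk X j) /\ blk Y i = flipat (blk X i) p0.
Proof.
move/cube_adjP => [n0 Hn]; move: Hn; rewrite -(unidxK n0).
case: (unidx n0) => p0 i Hn; exists i, p0; split.
- move=> j Hj; apply/ffunP => p; rewrite !ffunE.
  apply/eqP; rewrite eq_sym; apply/negPn; rewrite Hn (inj_eq (can_inj idxK)) xpair_eqE.
  by rewrite (negbTE Hj) andbF.
- apply/ffunP => p; rewrite !ffunE.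
  have := Hn (idx (p, i)); rewrite (inj_eq (can_inj idxK)) xpair_eqE eqxx andbT.
  case: (p == _) => /=.
  + by case: (X _); case: (Y _).
  + by move/negbFE/eqP ->; rewrite addbF.
Qed.


Local Notation V := {ffun 'I_q -> bool}.
Local Notation e := (@cube_adj q).
Local Notation SE := (sedge e).
Local Notation SV := (svert m e).

Definition bv (cj : Blk) (xj yj : bool) (s : nat) : Blk :=
  if xj == yj then xorv cj xj else walk cj (if xj then m - s else s).
Definition P (c : 'I_q -> Blk) (x y : V) (s : nat) : Vert :=
  mk (fun j => bv (c j) (x j) (y j) s).
Definition Fc (c : 'I_q -> Blk) (v : SV) : Vert :=
  match v with
  | inl x => mk (fun j => xorv (c j) (x j))
  | inr (a, k) => P c (val a).1 (val a).2 k.+1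
  end.

Lemma Fc_path c (a : SE) s : s <= m -> Fc c (pathv m a s) = P c (val a).1 (val a).2 s.
Proof.
move=> Hs; rewrite /pathv; case: eqP => [->|Hs0].
  rewrite /= /P; apply: mk_ext => j; rewrite /bv.
  case: eqP => [->//|]; case: ((val a).1 j) => _; by rewrite ?subn0 ?walkm ?walk0 ?xorv0.
case: insubP => [k Hk Ek|Hk] /=.
  by rewrite Ek prednK //; lia.
have Esm : s = m by move: Hk; rewrite -ltnS; lia.
rewrite /P Esm; apply: mk_ext => j; rewrite /bv.
case: eqP => [->//|]; case: ((val a).1 j); case: ((val a).2 j) => //= _;
  by rewrite ?subnn ?walkm ?walk0 ?xorv0.
Qed.


Lemma dir (x y : V) : e x y -> exists i, forall j, (x j != y j) = (j == i).
Proof. exact: cube_adjP. Qed.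

Lemma sedge_adj (a : SE) : e (val a).1 (val a).2.
Proof. by case/andP: (valP a). Qed.

Lemma bv_nondir cj xj yj s : xj = yj -> bv cj xj yj s = xorv cj xj.
Proof. by rewrite /bv => ->; rewrite eqxx. Qed.

Lemma bv_dir cj (xj yj : bool) s : xj != yj -> bv cj xj yj s = walk cj (if xj then m - s else s).
Proof. by rewrite /bv => /negbTE ->. Qed.

Lemma bv_step cj (xj yj : bool) s : xj != yj -> s < m -> exists t : 'I_m,
  (bv cj xj yj s = walk cj t /\ bv cj xj yj s.+1 = walk cj t.+1) \/
  (bv cj xj yj s = walk cj t.+1 /\ bv cj xj yj s.+1 = walk cj t).
Proof.
move=> Hxy Hs; rewrite !bv_dir //; case: xj Hxy => _.
- have Ht : m - s.+1 < m by lia.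
  exists (Ordinal Ht); right => /=; split; congr walk; lia.
- by exists (Ordinal Hs); left.
Qed.

Lemma P_adj c (a : SE) s : s < m ->
  cube_adj (P c (val a).1 (val a).2 s) (P c (val a).1 (val a).2 s.+1).
Proof.
move=> Hs; have [i Hi] := dir (sedge_adj a).
have Hxy : (val a).1 i != (val a).2 i by rewrite Hi.
have [t [[E1 E2]|[E1 E2]]] := bv_step (c i) Hxy Hs.
- apply: (adj_mk (i := i) (p0 := tau (c i) t)).
    move=> j Hj; rewrite !bv_nondir //; apply/eqP; by rewrite -[_ == _]negbK Hi (negbTE Hj).
  by rewrite /= E1 E2 walkS.
- apply: (adj_mk (i := i) (p0 := tau (c i) t)).
    move=> j Hj; rewrite !bv_nondir //; apply/eqP; by rewrite -[_ == _]negbK Hi (negbTE Hj).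
  by rewrite /= E1 E2 walkS flipK.
Qed.

Lemma stretch_edge (u v : SV) : stretch_adj u v -> exists (a : SE) (j : 'I_m),
  (u = pathv m a j /\ v = pathv m a j.+1) \/ (v = pathv m a j /\ u = pathv m a j.+1).
Proof.
case/existsP => a /existsP [j /orP [/andP [/eqP -> /eqP ->]| /andP[/eqP -> /eqP ->]]];
  exists a, j; auto.
Qed.

Lemma Fc_adj c (u v : SV) : stretch_adj u v -> cube_adj (Fc c u) (Fc c v).
Proof.
case/stretch_edge => a [j [[-> ->]|[-> ->]]];
rewrite !Fc_path ?(ltnW (ltn_ord j)) ?(ltn_ord j) //.
- exact: P_adj.
- rewrite cube_adj_sym; exact: P_adj.
Qed.


Lemma xorv_cen (c c' : Blk) b b' : xorv c b = xorv c' b' -> c (cen h) = c' (cen h) -> b = b'.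
Proof.
move=> E Hc; have := congr1 (fun f : Blk => f (cen h)) E; rewrite !ffunE Hc.
exact: addbI.
Qed.

Lemma inl_inr c x (a : SE) (k : 'I_m.-1) : Fc c (inl x) != Fc c (inr (a, k)).
Proof.
apply/eqP => /= E.
have [i Hi] := dir (sedge_adj a).
have Hxy : (val a).1 i != (val a).2 i by rewrite Hi.
have := mk_inj E i; rewrite bv_dir // => /esym Ew.
have Hk := ltn_ord k; have Hk2 := Hk; simpl in Hk2.
have Hs : (if (val a).1 i then m - k.+1 else k.+1) <= m by case: ifP; lia.
have [] := walk_xorv Hs Ew; case: ifP; lia.
Qed.

Lemma neq_bool (a b : bool) : a != b -> b = ~~ a.
Proof. by case: a; case: b. Qed.

Lemma Fc_inj c : injective (Fc c).
Proof.
move=> [x|[a k]] [x'|[a' k']] E.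
- congr inl; apply/ffunP => j; exact: (xorv_cen (mk_inj E j)).
- by have := inl_inr c x a' k'; rewrite E eqxx.
- by have := inl_inr c x' a k; rewrite E eqxx.
move: E => /=.
case: a => [[x y] Ha]; case: a' => [[x' y'] Ha'] /= E.
have [i Hi] := dir (sedge_adj (exist _ (x, y) Ha)).
have [i' Hi'] := dir (sedge_adj (exist _ (x', y') Ha')).
move: Hi Hi' => /= Hi Hi'.
have Hk := ltn_ord k; have Hk' := ltn_ord k'; have Hk2 := Hk; have Hk2' := Hk'; simpl in Hk2, Hk2'.
have Hxy : x i != y i by rewrite Hi.
have Ei := mk_inj E i; rewrite bv_dir // in Ei.
have Hxy' : x' i != y' i.
  apply/negP => /eqP H; move: Ei; rewrite bv_nondir // => Ew.
  have Hs : (if x i then m - k.+1 else k.+1) <= m by case: ifP; lia.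
  have [] := walk_xorv Hs Ew; case: ifP; lia.
have Eii : i' = i by apply/eqP; rewrite eq_sym -Hi'.
subst i'.
rewrite bv_dir // in Ei.
have Ej : forall j, j != i -> x j = x' j /\ y j = x j /\ y' j = x' j.
  move=> j Hj.
  have Hj1 : x j = y j by apply/eqP; rewrite -[_ == _]negbK Hi (negbTE Hj).
  have Hj2 : x' j = y' j by apply/eqP; rewrite -[_ == _]negbK Hi' (negbTE Hj).
  have := mk_inj E j; rewrite !bv_nondir // => /xorv_cen H; have Hx := H (erefl _).
  by rewrite Hj1 Hj2 in Hx *.
have Es : (if x i then m - k.+1 else k.+1) = (if x' i then m - k'.+1 else k'.+1).
  apply: (walk_inj _ _ Ei); case: ifP => _; lia.
case: (eqVneq (x i) (x' i)) => Hxi.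
- have Ex : x = x'.
    apply/ffunP => j; case: (eqVneq j i) => [->//|Hj]; by case: (Ej j Hj).
  subst x'.
  have Ey : y = y'.
    apply/ffunP => j; case: (eqVneq j i) => [->|Hj].
      by rewrite (neq_bool Hxy) (neq_bool Hxy').
    by case: (Ej j Hj) => _ [-> ->].
  subst y'.
  have Ekk : k = k'.
    apply: val_inj; move: Es; case: (x i); simpl; lia.
  subst k'; congr (inr (_, _)); exact: val_inj.
- exfalso.
  have Ex : x' = y.
    apply/ffunP => j; case: (eqVneq j i) => [->|Hj].
      by rewrite (neq_bool Hxy) (neq_bool Hxi).
    by case: (Ej j Hj) => <- [-> _].
  have Ey : y' = x.
    apply/ffunP => j; case: (eqVneq j i) => [->|Hj].
      by rewrite (neq_bool Hxy') (neq_bool Hxi) negbK.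
    by case: (Ej j Hj) => -> [_ ->].
  subst x' y'.
  move: Ha Ha' => /andP [_ H1] /andP [_ H2]; simpl in H1, H2; lia.
Qed.


Lemma copy_form c E : E \in copy_edges (@stretch_adj _ m e) (Fc c) ->
  exists (a : SE) (s : 'I_m), E = [set P c (val a).1 (val a).2 s; P c (val a).1 (val a).2 s.+1].
Proof.
case/imsetP => [[u v]]; rewrite inE /= => Huv ->.
case/stretch_edge: Huv => a [j [[-> ->]|[-> ->]]]; exists a, j;
rewrite !Fc_path ?(ltnW (ltn_ord j)) ?(ltn_ord j) //; exact: setUC.
Qed.

Lemma in_copy c (a : SE) (s : 'I_m) :
  [set P c (val a).1 (val a).2 s; P c (val a).1 (val a).2 s.+1] \in copy_edges (@stretch_adj _ m e) (Fc c).
Proof.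
apply/imsetP; exists (pathv m a s, pathv m a s.+1).
  rewrite inE /=; apply/existsP; exists a; apply/existsP; exists s; by rewrite !eqxx.
by rewrite /= !Fc_path ?(ltnW (ltn_ord s)) ?(ltn_ord s).
Qed.

Lemma blk_set2 (A B A' B' : Vert) : [set A; B] = [set A'; B'] ->
  forall j, [set blk A j; blk B j] = [set blk A' j; blk B' j].
Proof. by case/set2_eq => [[-> ->]|[-> ->]] j //; exact: setUC. Qed.

Lemma bv_pair cj (xj yj : bool) s : xj != yj -> s < m -> exists t : 'I_m,
  [set bv cj xj yj s; bv cj xj yj s.+1] = [set walk cj t; walk cj t.+1].
Proof.
move=> Hxy Hs; have [t [[-> ->]|[-> ->]]] := bv_step cj Hxy Hs; exists t => //.
exact: setUC.
Qed.

Lemma set2_single (T : finType) (u w w' : T) : [set u; u] = [set w; w'] -> w = w'.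
Proof. by case/set2_eq => [[<- <-]|[<- <-]]. Qed.

Lemma set2_same (T : finType) (u w : T) : [set u; u] = [set w; w] -> u = w.
Proof. by case/set2_eq => [[-> _]|[-> _]]. Qed.

Lemma disj_core (c c' : 'I_q -> Blk) (a a' : SE) (s s' : 'I_m) :
  (forall j, c j (cen h) = false) -> (forall j, c' j (cen h) = false) ->
  [set P c (val a).1 (val a).2 s; P c (val a).1 (val a).2 s.+1] =
  [set P c' (val a').1 (val a').2 s'; P c' (val a').1 (val a').2 s'.+1] ->
  forall j, c j = c' j.
Proof.
move=> Hc Hc' /blk_set2 Eb.
have Eb' : forall j, [set bv (c j) ((val a).1 j) ((val a).2 j) s; bv (c j) ((val a).1 j) ((val a).2 j) s.+1]
  = [set bv (c' j) ((val a').1 j) ((val a').2 j) s'; bv (c' j) ((val a').1 j) ((val a').2 j) s'.+1].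
  by move=> j; have := Eb j; rewrite /P !mkK.
have [i Hi] := dir (sedge_adj a).
have [i' Hi'] := dir (sedge_adj a').
have Eii : i' = i.
  apply/eqP; rewrite eq_sym -Hi'; apply/negP => /eqP Heq.
  have Hxy : (val a).1 i != (val a).2 i by rewrite Hi.
  have [t Et] := bv_pair (c i) Hxy (ltn_ord s).
  have := Eb' i; rewrite Et !(bv_nondir _ _ Heq) => /esym /set2_single.
  by move/eqP; rewrite (negbTE (walk_neq _ _)).
subst i'.
move=> j; case: (eqVneq j i) => [->|Hj].
  have Hxy : (val a).1 i != (val a).2 i by rewrite Hi.
  have Hxy' : (val a').1 i != (val a').2 i by rewrite Hi'.
  have [t Et] := bv_pair (c i) Hxy (ltn_ord s).
  have [t' Et'] := bv_pair (c' i) Hxy' (ltn_ord s').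
  have := Eb' i; rewrite Et Et' => /QD; apply; [exact: Hc | exact: Hc'].
have Hj1 : (val a).1 j = (val a).2 j by apply/eqP; rewrite -[_ == _]negbK Hi (negbTE Hj).
have Hj2 : (val a').1 j = (val a').2 j by apply/eqP; rewrite -[_ == _]negbK Hi' (negbTE Hj).
have := Eb' j; rewrite !(bv_nondir _ _ Hj1) !(bv_nondir _ _ Hj2) => /set2_same E.
have Ex := xorv_cen E (etrans (Hc j) (esym (Hc' j))).
by rewrite -(xorvK (c j) ((val a).1 j)) E Ex xorvK.
Qed.


Lemma pair_mk (X Y : Vert) i (Z Z' : 'I_q -> Blk) :
  (forall j, j != i -> Z j = blk X j /\ Z' j = blk X j /\ blk Y j = blk X j) ->
  [set Z i; Z' i] = [set blk X i; blk Y i] -> [set mk Z; mk Z'] = [set X; Y].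
Proof.
move=> H; case/set2_eq => [[E1 E2]|[E1 E2]].
- rewrite -(blkK X) -(blkK Y); congr [set _; _]; apply: mk_ext => j;
  (case: (eqVneq j i) => [->|Hj]; [by rewrite ?E1 ?E2 | case: (H j Hj) => A [B C]; by rewrite ?A ?B ?C]).
- rewrite setUC -(blkK X) -(blkK Y); congr [set _; _]; apply: mk_ext => j;
  (case: (eqVneq j i) => [->|Hj]; [by rewrite ?E1 ?E2 | case: (H j Hj) => A [B C]; by rewrite ?A ?B ?C]).
Qed.

Lemma cover (X Y : Vert) : cube_adj X Y -> exists c : 'I_q -> Blk,
  (forall j, c j (cen h) = false) /\ exists (a : SE) (s : 'I_m),
  [set X; Y] = [set P c (val a).1 (val a).2 s; P c (val a).1 (val a).2 s.+1].
Proof.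
case/adj_blk => i [p0 [H1 H2]].
have [ci [t [Hci Eset]]] := QC (blk X i) p0.
pose c := fun j => if j == i then ci else xorv (blk X j) (blk X j (cen h)).
pose x : V := [ffun j => if j == i then false else blk X j (cen h)].
pose y : V := [ffun j => if j == i then true else blk X j (cen h)].
have Hxy : e x y.
  apply/cards1P; exists i; apply/setP => j; rewrite !inE !ffunE.
  by case: (j == i); rewrite ?eqxx.
have Hxyi : x != y.
  apply/eqP => /(congr1 (fun f : V => f i)); by rewrite !ffunE eqxx.
have Hc : forall j, c j (cen h) = false.
  by move=> j; rewrite /c; case: eqP => // _; rewrite ffunE addbb.
have Hoff : forall j, j != i -> xorv (c j) (x j) = blk X j.
  by move=> j Hj; rewrite /c !ffunE (negbTE Hj) xorvK.
exists c; split => //.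
case: (ltnP (enum_rank x) (enum_rank y)) => Hr.
- have Ha : e (x, y).1 (x, y).2 && (enum_rank (x, y).1 < enum_rank (x, y).2) by rewrite /= Hxy Hr.
  exists (exist _ (x, y) Ha), t; apply/esym; apply: (pair_mk (i := i)) => /=.
    move=> j Hj; rewrite !bv_nondir ?Hoff ?H1 //; by rewrite !ffunE (negbTE Hj).
  by rewrite /c /bv !ffunE eqxx /= H2 Eset.
- have Hr' : enum_rank y < enum_rank x.
    rewrite ltn_neqAle Hr andbT; apply/negP => /eqP /val_inj /enum_rank_inj E.
    by rewrite E eqxx in Hxyi.
  have Ha : e (y, x).1 (y, x).2 && (enum_rank (y, x).1 < enum_rank (y, x).2).
    by rewrite /= Hr' cube_adj_sym Hxy.
  have Hs : h.*2 - t < m by lia.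
  exists (exist _ (y, x) Ha), (Ordinal Hs); apply/esym; apply: (pair_mk (i := i)) => /=.
    move=> j Hj; have Hyx : y j = x j by rewrite !ffunE (negbTE Hj).
    by rewrite !bv_nondir // Hyx Hoff // H1.
  rewrite /c /bv !ffunE eqxx /= H2 Eset setUC; congr [set walk _ _; walk _ _]; have := ltn_ord t; lia.
Qed.

End Big.

Theorem main_div (h q : nat) :
  divides (@stretch_adj _ (h.*2.+1) (@cube_adj q)) (@cube_adj (h.*2.+1 * q)).
Proof.
pose Cset := [set c : {ffun 'I_q -> {ffun 'I_(h.*2.+1) -> bool}} | [forall j, c j (cen h) == false]].
have HC : forall i : 'I_#|Cset|, forall j, enum_val i j (cen h) = false.
  by move=> i j; have := enum_valP i; rewrite inE => /forallP /(_ j) /eqP.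
exists #|Cset|, (fun i : 'I_#|Cset| => Fc (h:=h) (enum_val i)); split; [|split].
- move=> i; split; [exact: Fc_inj | move=> u v; exact: Fc_adj].
- move=> i j Hij; rewrite disjoint_subset; apply/subsetP => E /copy_form [a [s ->]]; rewrite inE; apply/negP => /copy_form [a' [s' Es]].
  have := disj_core (HC i) (HC j) Es => Ec.
  have : enum_val i = enum_val j by apply/ffunP => k; exact: Ec.
  by move/enum_val_inj => Eij; rewrite Eij eqxx in Hij.
- apply/eqP; rewrite eqEsubset; apply/andP; split.
  + apply/bigcupsP => i _; apply/subsetP => E /copy_form [a [s ->]].
    apply/imsetP; exists (P (enum_val i) (val a).1 (val a).2 s, P (enum_val i) (val a).1 (val a).2 s.+1) => //.
    by rewrite inE /= P_adj.
  + apply/subsetP => E /imsetP [[X Y]]; rewrite inE /= => HXY ->.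
    have [c [Hc [a [s Es]]]] := cover HXY.
    pose cf := [ffun j => c j].
    have Hcin : cf \in Cset by rewrite inE; apply/forallP => j; rewrite ffunE Hc.
    apply/bigcupP; exists (enum_rank_in Hcin cf) => //.
    rewrite enum_rankK_in // Es.
    have -> : P c (val a).1 (val a).2 s = P cf (val a).1 (val a).2 s.
      by rewrite /P; apply: mk_ext => j; rewrite ffunE.
    have -> : P c (val a).1 (val a).2 s.+1 = P cf (val a).1 (val a).2 s.+1.
      by rewrite /P; apply: mk_ext => j; rewrite ffunE.
    exact: in_copy.
Qed.


Theorem proposition1 (m q : nat) :
  odd m -> 0 < q -> divides (@stretch_adj _ m (@cube_adj q)) (@cube_adj (m * q)).
Proof.
move=> Hm _.
have Em : m = (m./2).*2.+1 by rewrite -{1}(odd_double_half m) Hm add1n.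
move: (m./2) Em => h Em; subst m.
exact: main_div.
Qed.
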